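(* For every $z\in\mathbb{C}\setminus[0,\infty)$ and every $x\in\mathbb{Z}_+$, $$\xi_z(x)=\int_0^\infty e^{-\eta}(\eta-z)^{-1}\,[\phi_\eta(x)-\phi_z(x)]\,\mathrm{d}\eta .$$
   Context: $\mathbb{Z}_+=\{0,1,2,\dots\}$. $L_0$ is the operator on $\ell^2(\mathbb{Z}_+)$ given by $$L_0v(x)=-(x+1)v(x+1)+(2x+1)v(x)-xv(x-1)\quad (x>0),\qquad L_0v(0)=-v(1)+v(0),$$ with domain $\{v:\sum_x x^2|v(x)|^2<\infty\}$. $\overline{L_0}$ is its self-adjoint closure. $\phi_z(x)=\sum_{k=0}^{x}\binom{x}{k}\frac{(-z)^k}{k!}$ (Laguerre polynomials, defined for all $z\in\mathbb{C}$). $\psi_z=(\overline{L_0}-z)^{-1}\chi_0$ is the resolvent vector, and $\xi_z:=\psi_z-\psi_z(0)\phi_z$ is the auxiliary resolvent vector. *)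

(* Defs.v *)
From Stdlib Require Import Reals Arith Factorial.
Open Scope R_scope.

Record Cx := mkCx { Re : R; Im : R }.

Definition Cx0 : Cx := mkCx 0 0.
Definition Cx1 : Cx := mkCx 1 0.
Definition RtoCx (r : R) : Cx := mkCx r 0.
Definition Cxadd (a b : Cx) : Cx := mkCx (Re a + Re b) (Im a + Im b).
Definition Cxopp (a : Cx) : Cx := mkCx (- Re a) (- Im a).
Definition Cxsub (a b : Cx) : Cx := Cxadd a (Cxopp b).
Definition Cxmul (a b : Cx) : Cx :=
  mkCx (Re a * Re b - Im a * Im b) (Re a * Im b + Im a * Re b).
Definition Cxnorm2 (a : Cx) : R := Re a * Re a + Im a * Im a.
(* multiplicative inverse (only meaningful for a <> 0) *)
Definition Cxinv (a : Cx) : Cx :=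
  mkCx (Re a / Cxnorm2 a) (- Im a / Cxnorm2 a).
Fixpoint Cxpow (a : Cx) (n : nat) : Cx :=
  match n with O => Cx1 | S m => Cxmul a (Cxpow a m) end.
Fixpoint Cxsum (f : nat -> Cx) (n : nat) : Cx :=
  match n with O => f O | S m => Cxadd (Cxsum f m) (f (S m)) end.

Definition phi (z : Cx) (x : nat) : Cx :=
  Cxsum (fun k => Cxmul (RtoCx (Binomial.C x k / INR (Factorial.fact k)))
                        (Cxpow (Cxopp z) k)) x.

Definition in_l2 (v : nat -> Cx) : Prop :=
  exists B : R, forall M : nat, sum_f_R0 (fun x => Cxnorm2 (v x)) M <= B.

Definition in_dom_L0 (v : nat -> Cx) : Prop :=
  in_l2 v /\
  exists B : R, forall M : nat,
    sum_f_R0 (fun x => INR x * INR x * Cxnorm2 (v x)) M <= B.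

Definition L0 (v : nat -> Cx) (x : nat) : Cx :=
  match x with
  | O => Cxadd (Cxopp (v 1%nat)) (v O)
  | S y => Cxsub (Cxadd (Cxmul (RtoCx (- (INR x + 1))) (v (S x)))
                        (Cxmul (RtoCx (2 * INR x + 1)) (v x)))
                 (Cxmul (RtoCx (INR x)) (v y))
  end.

Definition l2_converges (u : nat -> nat -> Cx) (v : nat -> Cx) : Prop :=
  forall eps : R, 0 < eps -> exists N : nat, forall n : nat, (N <= n)%nat ->
    forall M : nat, sum_f_R0 (fun x => Cxnorm2 (Cxsub (u n x) (v x))) M <= eps.

Definition closure_L0_graph (v w : nat -> Cx) : Prop :=
  in_l2 v /\ in_l2 w /\
  exists u : nat -> nat -> Cx,
    (forall n, in_dom_L0 (u n)) /\
    l2_converges u v /\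
    l2_converges (fun n => L0 (u n)) w.

Definition chi0 (x : nat) : Cx := match x with O => Cx1 | _ => Cx0 end.

(* psi = (closure L_0 - z)^{-1} chi_0 , i.e. psi in dom(closure L_0) and
   (closure L_0) psi - z psi = chi_0 *)
Definition is_resolvent_vector (z : Cx) (psi : nat -> Cx) : Prop :=
  closure_L0_graph psi (fun x => Cxadd (chi0 x) (Cxmul z (psi x))).

Definition xi (z : Cx) (psi : nat -> Cx) (x : nat) : Cx :=
  Cxsub (psi x) (Cxmul (psi O) (phi z x)).

Definition improper_integral_0_inf (F : R -> Cx) (l : Cx) : Prop :=
  forall eps : R, 0 < eps -> exists T0 : R, forall T : R, T0 <= T ->
    exists (pr_re : Riemann_integrable (fun t => Re (F t)) 0 T)
           (pr_im : Riemann_integrable (fun t => Im (F t)) 0 T),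
      Rabs (RiemannInt pr_re - Re l) < eps /\
      Rabs (RiemannInt pr_im - Im l) < eps.

Definition not_in_nonneg_reals (z : Cx) : Prop := ~ (Im z = 0 /\ 0 <= Re z).

(* Main.v *)
Require Import Defs.
From Coquelicot Require Import Coquelicot.
From Stdlib Require Import Reals Lra Lia Psatz Arith Factorial.
Import Defs.
Open Scope R_scope.

Lemma Cx_eq a b : Re a = Re b -> Im a = Im b -> a = b.
Proof. destruct a, b; simpl; intros; subst; auto. Qed.

Lemma Cx_ring : ring_theory Cx0 Cx1 Cxadd Cxmul Cxsub Cxopp (@eq Cx).
Proof. constructor; intros; try reflexivity; apply Cx_eq; simpl; ring. Qed.
Add Ring CxR : Cx_ring.

Lemma RtoCx_add a b : RtoCx (a + b) = Cxadd (RtoCx a) (RtoCx b).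
Proof. apply Cx_eq; simpl; ring. Qed.
Lemma RtoCx_mul a b : RtoCx (a * b) = Cxmul (RtoCx a) (RtoCx b).
Proof. apply Cx_eq; simpl; ring. Qed.
Lemma RtoCx_opp a : RtoCx (- a) = Cxopp (RtoCx a).
Proof. apply Cx_eq; simpl; ring. Qed.

Lemma Cxsum_ext f g n : (forall k, (k <= n)%nat -> f k = g k) -> Cxsum f n = Cxsum g n.
Proof.
  induction n; intros H; simpl. apply H; lia.
  rewrite IHn, H; auto; intros; apply H; lia.
Qed.
Lemma Cxsum_add f g n : Cxsum (fun k => Cxadd (f k) (g k)) n = Cxadd (Cxsum f n) (Cxsum g n).
Proof. induction n; simpl; auto. rewrite IHn; ring. Qed.
Lemma Cxsum_scal c f n : Cxsum (fun k => Cxmul c (f k)) n = Cxmul c (Cxsum f n).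
Proof. induction n; simpl; auto. rewrite IHn; ring. Qed.
Lemma Cxsum_shift f n : Cxsum f (S n) = Cxadd (f O) (Cxsum (fun k => f (S k)) n).
Proof. induction n; simpl; auto. simpl in IHn. rewrite IHn. ring. Qed.
Lemma Cxsum_R f n : Cxsum (fun k => RtoCx (f k)) n = RtoCx (sum_f_R0 f n).
Proof. induction n; simpl; auto. rewrite IHn, RtoCx_add; auto. Qed.

Definition bn (n k : nat) : R := if (k <=? n)%nat then C n k else 0.

Definition pterm (z : Cx) (n k : nat) : Cx :=
  Cxmul (RtoCx (bn n k / INR (fact k))) (Cxpow (Cxopp z) k).

Lemma phi_ext z n N : (n <= N)%nat -> phi z n = Cxsum (pterm z n) N.
Proof.
  intros H. induction H.
  - unfold phi, pterm. apply Cxsum_ext. intros k Hk. unfold bn.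
    destruct (Nat.leb_spec k n); [reflexivity|lia].
  - simpl. rewrite IHle. replace (pterm z n (S m)) with Cx0. ring.
    unfold pterm, bn.
    destruct (Nat.leb_spec (S m) n); [lia|].
    apply Cx_eq; simpl; unfold Rdiv; ring.
Qed.
Ltac factsimp := repeat rewrite ?fact_simpl, ?mult_INR.

Lemma bn_rec m j :
  (INR (S m) + 1) * bn (S (S m)) (S j) =
  (2 * INR (S m) + 1) * bn (S m) (S j) + INR (S j) * bn (S m) j - INR (S m) * bn m (S j).
Proof.
  unfold bn.
  destruct (le_lt_dec (S j) m) as [H|H].
  - destruct (Nat.leb_spec (S j) (S (S m))); [|lia].
    destruct (Nat.leb_spec (S j) (S m)); [|lia].
    destruct (Nat.leb_spec j (S m)); [|lia].
    destruct (Nat.leb_spec (S j) m); [|lia].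
    destruct (Nat.le_exists_sub (S j) m H) as [r [Hr _]].
    replace m with (S (r + j)) in * by lia. clear Hr.
    unfold C.
    replace (S (S (S (r + j))) - S j)%nat with (S (S r)) by lia.
    replace (S (S (r + j)) - S j)%nat with (S r) by lia.
    replace (S (S (r + j)) - j)%nat with (S (S r)) by lia.
    replace (S (r + j) - S j)%nat with r by lia.
    factsimp. rewrite !S_INR.
    pose proof (INR_fact_neq_0 j). pose proof (INR_fact_neq_0 r).
    pose proof (INR_fact_neq_0 (r+j)). pose proof (pos_INR r). pose proof (pos_INR j).
    pose proof (pos_INR (r+j)).
    rewrite plus_INR. field; repeat split; lra.
  - destruct (Nat.eq_dec j m) as [->|Hjm].
    + destruct (Nat.leb_spec (S m) (S (S m))); [|lia].
      destruct (Nat.leb_spec (S m) (S m)); [|lia].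
      destruct (Nat.leb_spec m (S m)); [|lia].
      destruct (Nat.leb_spec (S m) m); [lia|].
      unfold C.
      replace (S (S m) - S m)%nat with 1%nat by lia.
      replace (S m - S m)%nat with 0%nat by lia.
      replace (S m - m)%nat with 1%nat by lia.
      factsimp. simpl fact. rewrite !S_INR.
      pose proof (INR_fact_neq_0 m). pose proof (pos_INR m).
      simpl INR. field; repeat split; lra.
    + destruct (Nat.eq_dec j (S m)) as [->|Hjm2].
      * destruct (Nat.leb_spec (S (S m)) (S (S m))); [|lia].
        destruct (Nat.leb_spec (S (S m)) (S m)); [lia|].
        destruct (Nat.leb_spec (S m) (S m)); [|lia].
        destruct (Nat.leb_spec (S (S m)) m); [lia|].
        unfold C. rewrite !Nat.sub_diag. change (fact 0) with 1%nat. simpl INR.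
        pose proof (INR_fact_neq_0 (S m)). pose proof (INR_fact_neq_0 (S (S m))).
        field; repeat split; auto; lra.
      * destruct (Nat.leb_spec (S j) (S (S m))); [lia|].
        destruct (Nat.leb_spec (S j) (S m)); [lia|].
        destruct (Nat.leb_spec j (S m)); [lia|].
        destruct (Nat.leb_spec (S j) m); [lia|].
        ring.
Qed.

Lemma bn_0 n : bn n 0 = 1.
Proof. unfold bn. simpl. unfold C. rewrite Nat.sub_0_r. simpl fact.
  pose proof (INR_fact_neq_0 n). simpl INR. field. auto. Qed.

Definition gsh z x k := match k with O => Cx0 | S j => Cxmul z (pterm z x j) end.

Lemma zphi z x : Cxmul z (phi z x) = Cxsum (gsh z x) (S x).
Proof.
  rewrite Cxsum_shift. cbn [gsh]. rewrite (phi_ext z x x) by lia.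
  rewrite Cxsum_scal. ring.
Qed.

Lemma Cxsum_lin3 a b f g h N :
  Cxsub (Cxsub (Cxmul a (Cxsum f N)) (Cxsum g N)) (Cxmul b (Cxsum h N)) =
  Cxsum (fun k => Cxsub (Cxsub (Cxmul a (f k)) (g k)) (Cxmul b (h k))) N.
Proof. induction N; simpl; [ring| rewrite <- IHN; ring]. Qed.

Lemma phi_rec z m :
  Cxmul (RtoCx (INR (S m) + 1)) (phi z (S (S m))) =
  Cxsub (Cxsub (Cxmul (RtoCx (2 * INR (S m) + 1)) (phi z (S m)))
               (Cxmul z (phi z (S m))))
        (Cxmul (RtoCx (INR (S m))) (phi z m)).
Proof.
  rewrite zphi.
  rewrite (phi_ext z (S (S m)) (S (S m))), (phi_ext z (S m) (S (S m))),
          (phi_ext z m (S (S m))) by lia.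
  rewrite Cxsum_lin3, <- Cxsum_scal. apply Cxsum_ext. intros k _.
  destruct k as [|j].
  - unfold pterm; cbn [gsh Cxpow]. rewrite !bn_0.
    apply Cx_eq; simpl; field.
  - cbn [gsh]. unfold pterm. cbn [Cxpow].
    assert (HA : bn (S (S m)) (S j) =
      ((2 * INR (S m) + 1) * bn (S m) (S j) + INR (S j) * bn (S m) j - INR (S m) * bn m (S j))
      / (INR (S m) + 1)).
    { rewrite <- bn_rec. pose proof (pos_INR (S m)). field. lra. }
    rewrite HA. rewrite fact_simpl, mult_INR.
    pose proof (pos_INR (S m)). pose proof (INR_fact_neq_0 j). pose proof (pos_INR j).
    rewrite S_INR.
    apply Cx_eq; cbn [Re Im RtoCx Cxmul Cxsub Cxadd Cxopp]; field; pose proof (pos_INR m); repeat split; first [assumption | (apply not_0_INR; lia) | lra].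
Qed.

Lemma phi_0 z : phi z 0 = Cx1.
Proof. unfold phi; simpl. apply Cx_eq; simpl; unfold C; simpl; field. Qed.
Lemma phi_1 z : phi z 1 = Cxsub Cx1 z.
Proof. unfold phi; simpl. apply Cx_eq; simpl; unfold C; simpl; field. Qed.

Definition cvC (a : nat -> Cx) (l : Cx) := forall eps, 0 < eps ->
  exists N, forall n, (N <= n)%nat -> Cxnorm2 (Cxsub (a n) l) <= eps.

Lemma norm2_ge0 p : 0 <= Cxnorm2 p.
Proof. unfold Cxnorm2; nra. Qed.

Lemma sum_ge_term (f : nat -> R) M x :
  (forall i, 0 <= f i) -> (x <= M)%nat -> f x <= sum_f_R0 f M.
Proof.
  intros Hf H. induction M.
  - replace x with 0%nat by lia. simpl; lra.
  - simpl. destruct (Nat.eq_dec x (S M)) as [->|Hn].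
    + assert (0 <= sum_f_R0 f M) by (apply cond_pos_sum; auto). lra.
    + pose proof (Hf (S M)). assert (f x <= sum_f_R0 f M) by (apply IHM; lia). lra.
Qed.

Lemma l2_pointwise u v x : l2_converges u v -> cvC (fun n => u n x) (v x).
Proof.
  intros H eps He. destruct (H eps He) as [N HN]. exists N. intros n Hn.
  eapply Rle_trans; [|apply (HN n Hn x)].
  apply (sum_ge_term (fun x0 => Cxnorm2 (Cxsub (u n x0) (v x0)))); auto.
  intros; apply norm2_ge0.
Qed.

Lemma cvC_add a b l m : cvC a l -> cvC b m ->
  cvC (fun n => Cxadd (a n) (b n)) (Cxadd l m).
Proof.
  intros Ha Hb eps He.
  destruct (Ha (eps/4)) as [N1 H1]; [lra|].
  destruct (Hb (eps/4)) as [N2 H2]; [lra|].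
  exists (max N1 N2). intros n Hn.
  specialize (H1 n ltac:(lia)). specialize (H2 n ltac:(lia)).
  unfold Cxnorm2 in *. destruct (a n) as [a1 a2], (b n) as [b1 b2], l as [l1 l2], m as [m1 m2]; simpl in *.
  pose proof (pow2_ge_0 ((a1 + - l1) - (b1 + - m1))).
  pose proof (pow2_ge_0 ((a2 + - l2) - (b2 + - m2))). nra.
Qed.

Lemma cvC_scal r a l : cvC a l -> cvC (fun n => Cxmul (RtoCx r) (a n)) (Cxmul (RtoCx r) l).
Proof.
  intros Ha eps He.
  destruct (Ha (eps / (r*r+1))) as [N1 H1].
  { apply Rdiv_lt_0_compat; nra. }
  exists N1. intros n Hn. specialize (H1 n Hn).
  assert (E : Cxnorm2 (Cxsub (Cxmul (RtoCx r) (a n)) (Cxmul (RtoCx r) l)) =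
              r * r * Cxnorm2 (Cxsub (a n) l)).
  { unfold Cxnorm2; destruct (a n), l; simpl; ring. }
  rewrite E. pose proof (norm2_ge0 (Cxsub (a n) l)).
  assert (Cxnorm2 (Cxsub (a n) l) * (r*r+1) <= eps).
  { apply (Rmult_le_compat_r (r*r+1)) in H1; [|nra].
    unfold Rdiv in H1. rewrite Rmult_assoc, Rinv_l in H1; nra. }
  nra.
Qed.

Lemma cvC_opp a l : cvC a l -> cvC (fun n => Cxopp (a n)) (Cxopp l).
Proof.
  intros Ha eps He. destruct (Ha eps He) as [N H]. exists N. intros n Hn.
  specialize (H n Hn). unfold Cxnorm2 in *; destruct (a n), l; simpl in *; nra.
Qed.

Lemma cvC_unique a l m : cvC a l -> cvC a m -> l = m.
Proof.
  intros Hl Hm.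
  set (d := Cxnorm2 (Cxsub l m)).
  assert (Hd : d = 0).
  { destruct (Req_dec d 0) as [|Hne]; auto. exfalso.
    assert (0 < d) by (pose proof (norm2_ge0 (Cxsub l m)); unfold d in *; lra).
    destruct (Hl (d/8)) as [N1 H1]; [lra|].
    destruct (Hm (d/8)) as [N2 H2]; [lra|].
    specialize (H1 (max N1 N2) ltac:(lia)). specialize (H2 (max N1 N2) ltac:(lia)).
    unfold d, Cxnorm2 in *. destruct (a (max N1 N2)) as [a1 a2], l as [l1 l2], m as [m1 m2]; simpl in *.
    pose proof (pow2_ge_0 ((a1 + - l1) + (a1 + - m1))).
    pose proof (pow2_ge_0 ((a2 + - l2) + (a2 + - m2))). nra. }
  unfold d, Cxnorm2 in Hd. destruct l as [l1 l2], m as [m1 m2]; simpl in *.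
  pose proof (pow2_ge_0 (l1 + - m1)). pose proof (pow2_ge_0 (l2 + - m2)).
  assert (Rsqr (l1 + - m1) = 0) by (unfold Rsqr; simpl in *; nra).
  assert (Rsqr (l2 + - m2) = 0) by (unfold Rsqr; simpl in *; nra).
  apply Rsqr_0_uniq in H1. apply Rsqr_0_uniq in H2.
  apply Cx_eq; simpl; lra.
Qed.

Lemma L0_cont u v x : (forall y, cvC (fun n => u n y) (v y)) ->
  cvC (fun n => L0 (u n) x) (L0 v x).
Proof.
  intros H. destruct x as [|y]; simpl.
  - apply cvC_add; [apply cvC_opp|]; apply H.
  - unfold Cxsub. apply cvC_add; [apply cvC_add|apply cvC_opp]; apply cvC_scal; apply H.
Qed.

Lemma psi_eq z psi x : is_resolvent_vector z psi ->
  L0 psi x = Cxadd (chi0 x) (Cxmul z (psi x)).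
Proof.
  intros [_ [_ [u [_ [Hu HLu]]]]].
  apply (cvC_unique (fun n => L0 (u n) x)).
  - apply L0_cont. intros y. apply l2_pointwise; auto.
  - apply (l2_pointwise (fun n => L0 (u n)) (fun x0 => Cxadd (chi0 x0) (Cxmul z (psi x0)))). auto.
Qed.

Definition limR (u : R -> R) (l : R) := forall eps, 0 < eps ->
  exists T0, forall T, T0 <= T -> Rabs (u T - l) < eps.
Definition RIMP (f : R -> R) (l : R) :=
  (forall T, 0 <= T -> ex_RInt f 0 T) /\ limR (fun T => RInt f 0 T) l.

Lemma limR_lin p q u v a b : limR u a -> limR v b ->
  limR (fun T => p * u T + q * v T) (p * a + q * b).
Proof.
  intros Hu Hv eps He.
  set (K := Rabs p + Rabs q + 1).
  pose proof (Rabs_pos p); pose proof (Rabs_pos q).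
  assert (HK: 0 < K) by (unfold K; lra).
  set (e := eps / K).
  assert (He0 : 0 < e) by (apply Rdiv_lt_0_compat; lra).
  assert (HeK : e * K = eps) by (unfold e; field; lra).
  destruct (Hu e He0) as [T1 H1]. destruct (Hv e He0) as [T2 H2].
  exists (Rmax T1 T2). intros T HT.
  specialize (H1 T (Rle_trans _ _ _ (Rmax_l _ _) HT)).
  specialize (H2 T (Rle_trans _ _ _ (Rmax_r _ _) HT)).
  replace (p * u T + q * v T - (p * a + q * b)) with (p * (u T - a) + q * (v T - b)) by ring.
  eapply Rle_lt_trans; [apply Rabs_triang|]. rewrite !Rabs_mult.
  assert (Rabs p * Rabs (u T - a) <= Rabs p * e) by (apply Rmult_le_compat_l; lra).
  assert (Rabs q * Rabs (v T - b) <= Rabs q * e) by (apply Rmult_le_compat_l; lra).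
  unfold K in HeK. nra.
Qed.

Lemma limR_ext u v l : (forall T, 0 <= T -> u T = v T) -> limR u l -> limR v l.
Proof.
  intros H Hu eps He. destruct (Hu eps He) as [T0 HT]. exists (Rmax T0 0).
  intros T HT'. rewrite <- H. apply HT. eapply Rle_trans; [apply Rmax_l|eauto].
  eapply Rle_trans; [apply Rmax_r|eauto].
Qed.

Lemma limR_const c : limR (fun _ => c) c.
Proof. intros eps He. exists 0. intros. rewrite Rminus_diag, Rabs_R0. auto. Qed.

Lemma limR_val u a b : limR u a -> a = b -> limR u b.
Proof. intros; subst; auto. Qed.

Lemma RInt_lin (f g : R -> R) p q a b : ex_RInt f a b -> ex_RInt g a b ->
  is_RInt (fun t => p * f t + q * g t) a b (p * RInt f a b + q * RInt g a b).
Proof.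
  intros Hf Hg.
  pose proof (is_RInt_plus _ _ a b _ _ (is_RInt_scal _ a b p _ (RInt_correct f a b Hf))
               (is_RInt_scal _ a b q _ (RInt_correct g a b Hg))) as H.
  eapply is_RInt_ext; [|exact H]. intros x _. reflexivity.
Qed.

Lemma RIMP_ext f g l : (forall t, 0 <= t -> f t = g t) -> RIMP f l -> RIMP g l.
Proof.
  intros H [Hf Hl]. split.
  - intros T HT. apply (ex_RInt_ext f); auto. intros x [Hx _].
    rewrite Rmin_left in Hx by lra. apply H; lra.
  - apply (limR_ext (fun T => RInt f 0 T)); auto. intros T HT.
    apply RInt_ext. intros x [Hx _]. rewrite Rmin_left in Hx by lra. apply H; lra.
Qed.

Lemma RIMP_val f a b : RIMP f a -> a = b -> RIMP f b.
Proof. intros; subst; auto. Qed.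

Lemma RIMP_lin f g a b p q : RIMP f a -> RIMP g b ->
  RIMP (fun t => p * f t + q * g t) (p * a + q * b).
Proof.
  intros [Hf Lf] [Hg Lg]. split.
  - intros T HT. eexists. apply RInt_lin; auto.
  - apply (limR_ext (fun T => p * RInt f 0 T + q * RInt g 0 T)).
    + intros T HT. symmetry. apply is_RInt_unique. apply RInt_lin; auto.
    + apply limR_lin; auto.
Qed.

Lemma RIMP_scal f a c : RIMP f a -> RIMP (fun t => c * f t) (c * a).
Proof.
  intros H. eapply RIMP_val; [eapply RIMP_ext; [|apply (RIMP_lin _ _ _ _ c 0 H H)]|].
  - intros; simpl; ring.
  - ring.
Qed.

Definition IMP (F : R -> Cx) (l : Cx) :=
  RIMP (fun t => Re (F t)) (Re l) /\ RIMP (fun t => Im (F t)) (Im l).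

Lemma cont_R (f : R -> R) x : ex_derive f x -> continuous f x.
Proof. intros H. exact (@ex_derive_continuous R_AbsRing R_NormedModule f x H). Qed.

Lemma IMP_correct F l : IMP F l -> improper_integral_0_inf F l.
Proof.
  intros [[Hr Lr] [Hi Li]] eps He.
  destruct (Lr eps He) as [T1 H1]; destruct (Li eps He) as [T2 H2].
  exists (Rmax 0 (Rmax T1 T2)). intros T HT.
  assert (H0 : 0 <= T) by (eapply Rle_trans; [apply Rmax_l|eauto]).
  assert (Hm : Rmax T1 T2 <= T) by (eapply Rle_trans; [apply Rmax_r|eauto]).
  exists (ex_RInt_Reals_0 _ _ _ (Hr T H0)), (ex_RInt_Reals_0 _ _ _ (Hi T H0)).
  rewrite <- !RInt_Reals. split.
  - apply H1. eapply Rle_trans; [apply Rmax_l|eauto].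
  - apply H2. eapply Rle_trans; [apply Rmax_r|eauto].
Qed.

Lemma IMP_ext F G l : (forall t, 0 <= t -> F t = G t) -> IMP F l -> IMP G l.
Proof.
  intros H [Hr Hi]. split; (eapply RIMP_ext; [|eauto]); intros t Ht; cbv beta; rewrite H; auto.
Qed.

Lemma IMP_val F a b : IMP F a -> a = b -> IMP F b.
Proof. intros; subst; auto. Qed.

Lemma IMP_lin F G a b c d : IMP F a -> IMP G b ->
  IMP (fun t => Cxadd (Cxmul c (F t)) (Cxmul d (G t))) (Cxadd (Cxmul c a) (Cxmul d b)).
Proof.
  intros [Fr Fi] [Gr Gi]. split.
  - pose proof (RIMP_lin _ _ _ _ (Re c) (- Im c) Fr Fi) as H1.
    pose proof (RIMP_lin _ _ _ _ (Re d) (- Im d) Gr Gi) as H2.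
    pose proof (RIMP_lin _ _ _ _ 1 1 H1 H2) as H3.
    eapply RIMP_val; [eapply RIMP_ext; [|exact H3]|].
    + intros t _. simpl. ring.
    + simpl. ring.
  - pose proof (RIMP_lin _ _ _ _ (Re c) (Im c) Fi Fr) as H1.
    pose proof (RIMP_lin _ _ _ _ (Re d) (Im d) Gi Gr) as H2.
    pose proof (RIMP_lin _ _ _ _ 1 1 H1 H2) as H3.
    eapply RIMP_val; [eapply RIMP_ext; [|exact H3]|].
    + intros t _. simpl. ring.
    + simpl. ring.
Qed.

Lemma IMP_real f l : RIMP f l -> IMP (fun t => RtoCx (f t)) (RtoCx l).
Proof.
  intros H. split; simpl; auto.
  eapply RIMP_val; [eapply RIMP_ext; [|exact (RIMP_scal _ _ 0 H)]|].
  - intros; simpl; ring.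
  - simpl; ring.
Qed.

Lemma decay n : limR (fun T => exp (-T) * T^n) 0.
Proof.
  intros eps He. set (K := INR (fact (S n))). exists (K/eps + 1). intros T HT.
  assert (HK: 0 < K) by apply INR_fact_lt_0.
  assert (HKe : 0 < K/eps) by (apply Rdiv_lt_0_compat; lra).
  assert (HT0: 0 < T) by lra.
  assert (Hexp: T^(S n) / K <= exp T).
  { eapply Rle_trans; [|apply (exp_ge_taylor T (S n)); lra].
    apply (sum_ge_term (fun k => T^k / INR (fact k))); [|lia].
    intros i. apply Rmult_le_pos; [apply pow_le; lra|].
    left; apply Rinv_0_lt_compat, INR_fact_lt_0. }
  assert (HTe : K < T * eps).
  { assert (K/eps * eps = K) by (field; lra). nra. }
  pose proof (exp_pos T) as HE. pose proof (pow_lt T n HT0) as HP.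
  rewrite Rminus_0_r, exp_Ropp.
  set (E := exp T) in *. set (P := T^n) in *.
  assert (HTP : T * P <= E * K).
  { simpl in Hexp. fold P in Hexp.
    apply (Rmult_le_compat_r K) in Hexp; [|lra].
    unfold Rdiv in Hexp. rewrite Rmult_assoc, Rinv_l in Hexp; lra. }
  rewrite Rabs_right.
  2: { apply Rle_ge, Rmult_le_pos; [left; apply Rinv_0_lt_compat; lra| lra]. }
  apply (Rmult_lt_reg_r E); [lra|].
  replace (/ E * P * E) with P by (field; lra).
  apply (Rmult_lt_reg_r K); [lra|].
  nra.
Qed.

Lemma ex_RInt_mom k T : ex_RInt (fun t => exp (-t) * t^k) 0 T.
Proof.
  apply (@ex_RInt_continuous R_CompleteNormedModule). intros z _. apply cont_R. auto_derive. auto.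
Qed.

Lemma mom_step k T : RInt (fun t => exp (-t) * t^(S k)) 0 T =
  - exp (-T) * T^(S k) + INR (S k) * RInt (fun t => exp (-t) * t^k) 0 T.
Proof.
  assert (HI : is_RInt (fun t => exp (-t) * t^(S k) - INR (S k) * (exp (-t) * t^k)) 0 T
     (minus (- exp (-T) * T^(S k)) (- exp (-0) * 0^(S k)))).
  { apply (is_RInt_derive (fun t => - exp (-t) * t^(S k))).
    - intros x _. auto_derive; [auto|].
      change (match k with 0%nat => 1 | S _ => INR k + 1 end) with (INR (S k)).
      simpl pow. ring.
    - intros x _. apply cont_R. auto_derive. auto. }
  assert (E1 : 1 * RInt (fun t => exp (-t) * t^(S k)) 0 T +
               (- INR (S k)) * RInt (fun t => exp (-t) * t^k) 0 T =
               minus (- exp (-T) * T^(S k)) (- exp (-0) * 0^(S k))).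
  { apply (is_RInt_unique (fun t => exp (-t) * t^(S k) - INR (S k) * (exp (-t) * t^k)) 0 T) in HI.
    rewrite <- HI. symmetry. apply is_RInt_unique.
    eapply is_RInt_ext; [|apply RInt_lin; apply ex_RInt_mom].
    intros; simpl; ring. }
  change (minus (- exp (-T) * T^(S k)) (- exp (-0) * 0^(S k))) with
     ((- exp (-T) * T^(S k)) - (- exp (-0) * 0^(S k))) in E1.
  simpl pow in *. rewrite Rmult_0_l, Rmult_0_r in E1. lra.
Qed.

Lemma mom_0 T : RInt (fun t => exp (-t) * t^0) 0 T = 1 - exp (-T).
Proof.
  assert (HI : is_RInt (fun t => exp (-t) * t^0) 0 T (minus (- exp (-T)) (- exp (-0)))).
  { apply (is_RInt_derive (fun t => - exp (-t))).
    - intros x _. auto_derive; [auto|]. simpl; ring.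
    - intros x _. apply cont_R. auto_derive. auto. }
  apply (is_RInt_unique (fun t => exp (-t) * t^0) 0 T) in HI. rewrite HI.
  change (@eq R (- exp (-T) - (- exp (-0))) (1 - exp (-T))).
  rewrite Ropp_0, exp_0. ring.
Qed.

Lemma mom k : RIMP (fun t => exp (-t) * t^k) (INR (fact k)).
Proof.
  split; [intros; apply ex_RInt_mom|].
  induction k.
  - pose proof (limR_lin 1 (-1) _ _ _ _ (limR_const 1) (decay 0)) as H.
    eapply limR_val; [eapply limR_ext; [|exact H]|].
    + intros T _. rewrite mom_0. simpl; ring.
    + simpl; ring.
  - pose proof (limR_lin (-1) (INR (S k)) _ _ _ _ (decay (S k)) IHk) as H.
    eapply limR_val; [eapply limR_ext; [|exact H]|].
    + intros T _. rewrite mom_step. ring.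
    + rewrite fact_simpl, mult_INR. ring.
Qed.

Lemma pmom a n : RIMP (fun t => exp (-t) * sum_f_R0 (fun k => a k * t^k) n)
                      (sum_f_R0 (fun k => a k * INR (fact k)) n).
Proof.
  induction n.
  - eapply RIMP_val; [eapply RIMP_ext; [|exact (RIMP_scal _ _ (a 0%nat) (mom 0))]|].
    + intros; simpl; ring.
    + simpl; ring.
  - pose proof (RIMP_lin _ _ _ _ 1 (a (S n)) IHn (mom (S n))) as H.
    eapply RIMP_val; [eapply RIMP_ext; [|exact H]|].
    + intros; simpl; ring.
    + simpl; ring.
Qed.

Lemma Cxpow_R r k : Cxpow (RtoCx r) k = RtoCx (r ^ k).
Proof. induction k; simpl; [reflexivity|]. rewrite IHk, <- RtoCx_mul. reflexivity. Qed.

Lemma phi_real t x : phi (RtoCx t) x =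
  RtoCx (sum_f_R0 (fun k => (C x k / INR (fact k) * (-1)^k) * t^k) x).
Proof.
  unfold phi. rewrite <- Cxsum_R. apply Cxsum_ext. intros k _.
  rewrite <- RtoCx_opp, Cxpow_R, <- RtoCx_mul. f_equal.
  replace (-t) with (-1 * t) by ring. rewrite Rpow_mult_distr. ring.
Qed.

Lemma Ex_int x : (1 <= x)%nat ->
  IMP (fun t => Cxmul (RtoCx (exp (-t))) (phi (RtoCx t) x)) Cx0.
Proof.
  intros Hx.
  apply (IMP_ext (fun t => RtoCx (exp (-t) *
          sum_f_R0 (fun k => (C x k / INR (fact k) * (-1)^k) * t^k) x))).
  { intros t _. rewrite phi_real, <- RtoCx_mul. reflexivity. }
  eapply IMP_val; [apply IMP_real, pmom|].
  transitivity (RtoCx 0); [f_equal|reflexivity].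
  { transitivity (sum_f_R0 (fun i => C x i * (-1)^i * 1^(x-i)) x).
    - apply sum_eq. intros i _. rewrite pow1. pose proof (INR_fact_neq_0 i). field. auto.
    - rewrite <- binomial. replace (-1 + 1) with 0 by ring. apply pow_i. lia. }
Qed.

Lemma inv_mul z t : not_in_nonneg_reals z -> 0 <= t ->
  Cxmul (Cxinv (Cxsub (RtoCx t) z)) (Cxsub (RtoCx t) z) = Cx1.
Proof.
  intros Hz Ht. destruct z as [a b]. unfold not_in_nonneg_reals in Hz; simpl in Hz.
  assert (HN : (t + - a) * (t + - a) + (0 + - b) * (0 + - b) <> 0).
  { intros HN. apply Hz.
    pose proof (Rle_0_sqr (t + - a)). pose proof (Rle_0_sqr (0 + - b)). unfold Rsqr in *.
    assert (Rsqr (0 + - b) = 0) by (unfold Rsqr; lra).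
    assert (Rsqr (t + - a) = 0) by (unfold Rsqr; lra).
    apply Rsqr_0_uniq in H1. apply Rsqr_0_uniq in H2. split; lra. }
  apply Cx_eq; unfold Cxinv, Cxnorm2; simpl; field; replace (- b * - b) with ((0 + - b) * (0 + - b)) by ring; auto.
Qed.

Lemma eq_unit a b k u : u = Cx1 -> Cxsub a b = Cxmul k (Cxsub Cx1 u) -> a = b.
Proof.
  intros -> H. assert (H0 : Cxsub a b = Cx0) by (rewrite H; ring).
  transitivity (Cxadd (Cxsub a b) b); [ring|]. rewrite H0; ring.
Qed.

Lemma alpha_inv n : Cxmul (RtoCx (/ (INR n + 1))) (RtoCx (INR n + 1)) = Cx1.
Proof. pose proof (pos_INR n). apply Cx_eq; simpl; field; lra. Qed.

Lemma phi_rec' w m : phi w (S (S m)) =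
  Cxmul (RtoCx (/ (INR (S m) + 1)))
   (Cxsub (Cxsub (Cxmul (RtoCx (2 * INR (S m) + 1)) (phi w (S m))) (Cxmul w (phi w (S m))))
          (Cxmul (RtoCx (INR (S m))) (phi w m))).
Proof.
  rewrite <- phi_rec.
  transitivity (Cxmul (Cxmul (RtoCx (/ (INR (S m) + 1))) (RtoCx (INR (S m) + 1))) (phi w (S (S m)))).
  - rewrite alpha_inv. ring.
  - ring.
Qed.

Definition Gf (z : Cx) (x : nat) := fun eta : R =>
  Cxmul (RtoCx (exp (- eta)))
        (Cxmul (Cxinv (Cxsub (RtoCx eta) z)) (Cxsub (phi (RtoCx eta) x) (phi z x))).

Theorem mainTheorem8 (z : Cx) (psi : nat -> Cx) (x : nat) :
  not_in_nonneg_reals z ->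
  is_resolvent_vector z psi ->
  improper_integral_0_inf
    (fun eta : R =>
       Cxmul (RtoCx (exp (- eta)))
             (Cxmul (Cxinv (Cxsub (RtoCx eta) z))
                    (Cxsub (phi (RtoCx eta) x) (phi z x))))
    (xi z psi x).
Proof.
  intros Hz Hpsi. apply IMP_correct.
  assert (Hall : forall m, IMP (Gf z m) (xi z psi m) /\ IMP (Gf z (S m)) (xi z psi (S m))).
  { induction m.
    - split.
      + eapply IMP_ext; [|eapply IMP_val; [apply IMP_real, (RIMP_scal _ _ 0 (mom 0))|]].
        * intros t _. unfold Gf. rewrite !phi_0. apply Cx_eq; simpl; ring.
        * unfold xi. rewrite phi_0. apply Cx_eq; simpl; ring.
      + eapply IMP_ext; [|eapply IMP_val; [apply IMP_real, (RIMP_scal _ _ (-1) (mom 0))|]].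
        * intros t Ht. unfold Gf.
          assert (E : Cxsub (phi (RtoCx t) 1) (phi z 1) = Cxopp (Cxsub (RtoCx t) z)).
          { rewrite !phi_1. ring. }
          rewrite E.
          transitivity (Cxopp (Cxmul (RtoCx (exp (-t)))
                        (Cxmul (Cxinv (Cxsub (RtoCx t) z)) (Cxsub (RtoCx t) z)))).
          { rewrite inv_mul by auto. apply Cx_eq; simpl; ring. }
          ring.
        * pose proof (psi_eq z psi 0 Hpsi) as H0. cbn [L0 chi0] in H0.
          assert (E : psi 1%nat = Cxsub (psi 0%nat) (Cxadd (Cxopp (psi 1%nat)) (psi 0%nat))) by ring.
          rewrite H0 in E.
          unfold xi. rewrite E, phi_1.
          replace (RtoCx (-1 * INR (fact 0))) with (Cxopp Cx1) by (apply Cx_eq; simpl; ring).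
          ring.
    - destruct IHm as [H1 H2]. split; auto.
      set (al := RtoCx (/ (INR (S m) + 1))).
      set (c1 := Cxmul al (Cxsub (RtoCx (2 * INR (S m) + 1)) z)).
      set (c2 := Cxopp (Cxmul al (RtoCx (INR (S m))))).
      pose proof (IMP_lin _ _ _ _ c1 c2 H2 H1) as H3.
      pose proof (IMP_lin _ _ _ _ Cx1 (Cxopp al) H3 (Ex_int (S m) ltac:(lia))) as H4.
      eapply IMP_ext; [|eapply IMP_val; [exact H4|]].
      + intros t Ht. unfold Gf. rewrite (phi_rec' (RtoCx t) m), (phi_rec' z m).
        apply (eq_unit _ _ (Cxopp (Cxmul al (Cxmul (RtoCx (exp (-t))) (phi (RtoCx t) (S m)))))
                 (Cxmul (Cxinv (Cxsub (RtoCx t) z)) (Cxsub (RtoCx t) z))).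
        * apply inv_mul; auto.
        * unfold c1, c2, al. ring.
      + pose proof (psi_eq z psi (S m) Hpsi) as H0. cbn [L0 chi0] in H0.
        rewrite RtoCx_opp in H0.
        assert (E : Cxmul (RtoCx (INR (S m) + 1)) (psi (S (S m))) =
                    Cxsub (Cxsub (Cxmul (RtoCx (2 * INR (S m) + 1)) (psi (S m)))
                                 (Cxadd Cx0 (Cxmul z (psi (S m)))))
                          (Cxmul (RtoCx (INR (S m))) (psi m))).
        { rewrite <- H0. ring. }
        assert (E2 : psi (S (S m)) = Cxmul al (Cxmul (RtoCx (INR (S m) + 1)) (psi (S (S m))))).
        { unfold al. transitivity (Cxmul (Cxmul (RtoCx (/ (INR (S m) + 1))) (RtoCx (INR (S m) + 1))) (psi (S (S m)))).
          - rewrite alpha_inv. ring.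
          - ring. }
        unfold xi. rewrite E2, E, (phi_rec' z m). unfold c1, c2, al. ring. }
  exact (proj1 (Hall x)).
Qed.
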